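(* Let $n$ be a positive integer. Then $\mathsf{NAADT}(\mathsf{OMB}_n) = n$ and $\mathsf{D}_{\mathrm{cc}}^\rightarrow(\mathsf{OMB}_n \circ \mathsf{AND}) = \lceil\log(n + 1)\rceil$.
   Context: $\mathsf{OMB}_n:\{0,1\}^n\to\{0,1\}$ is defined by $\mathsf{OMB}_n(x)=1$ if $\max\{i\in[n]:x_i=0\}$ is odd and $0$ otherwise, with $\mathsf{OMB}_n(1^n)=0$. $\mathsf{AND}_S(x)=\prod_{i\in S}x_i$. $\mathsf{NAADT}(f)$ is the minimum $k$ for which there exist $S_1,\dots,S_k\subseteq[n]$ such that $f(x)$ is determined by $\mathsf{AND}_{S_1}(x),\dots,\mathsf{AND}_{S_k}(x)$ for all $x$. $f\circ\mathsf{AND}$ is the two-party function $(x,y)\mapsto f(x_1\wedge y_1,\dots,x_n\wedge y_n)$ (Alice holds $x$, Bob $y$); $\mathsf{D}_{\mathrm{cc}}^\rightarrow$ is deterministic one-way communication complexity. Logarithms are base 2. *)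

(* Defs.v *)
From mathcomp Require Import all_boot.
Set Implicit Arguments. Unset Strict Implicit. Unset Printing Implicit Defensive.

(* Inputs x in {0,1}^n are finite functions 'I_n -> bool; the 0-based index
   i : 'I_n stands for the paper's index i+1 in [n]. *)
Definition bits (n : nat) := {ffun 'I_n -> bool}.

(* OMB_n(x) = 1 iff max{ i in [n] : x_i = 0 } is odd; OMB_n(1^n) = 0.
   The paper's index of coordinate i : 'I_n is i.+1; if no coordinate is 0
   the max below is 0 (even), giving OMB_n(1^n) = 0. *)
Definition OMB (n : nat) (x : bits n) : bool :=
  odd (\max_(i : 'I_n | ~~ x i) i.+1).

Definition ANDS (n : nat) (S : {set 'I_n}) (x : bits n) : bool :=
  [forall i in S, x i].

Definition naadt_ok (n : nat) (f : bits n -> bool) (k : nat) : bool :=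
  [exists S : {ffun 'I_k -> {set 'I_n}},
     [forall x : bits n, forall y : bits n,
        [forall j : 'I_k, ANDS (S j) x == ANDS (S j) y] ==> (f x == f y)]].

Lemma naadt_ok_ex (n : nat) (f : bits n -> bool) : exists k, naadt_ok f k.
Proof.
exists n; apply/existsP; exists [ffun i => [set i]].
apply/forallP => x; apply/forallP => y; apply/implyP => /forallP H.
have -> // : x = y.
apply/ffunP => i; move: (H i); rewrite ffunE /ANDS.
case Hx: (x i); case Hy: (y i) => //.
- move/eqP => E; have : [forall j in [set i], x j].
    by apply/forall_inP => j; rewrite in_set1 => /eqP ->.
  by rewrite E => /forall_inP /(_ i); rewrite in_set1 eqxx Hy => /(_ isT).
- move/eqP => E; have : [forall j in [set i], y j].
    by apply/forall_inP => j; rewrite in_set1 => /eqP ->.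
  by rewrite -E => /forall_inP /(_ i); rewrite in_set1 eqxx Hx => /(_ isT).
Qed.

Definition NAADT (n : nat) (f : bits n -> bool) : nat := ex_minn (naadt_ok_ex f).

Definition compAND (n : nat) (f : bits n -> bool) (x y : bits n) : bool :=
  f [ffun i => x i && y i].

Definition oneway_ok (X Y : finType) (F : X -> Y -> bool) (c : nat) : bool :=
  [exists a : {ffun X -> {ffun 'I_c -> bool}},
   exists b : {ffun {ffun 'I_c -> bool} -> {ffun Y -> bool}},
     [forall x, forall y, F x y == b (a x) y]].

Lemma oneway_ok_ex (X Y : finType) (F : X -> Y -> bool) : exists c, oneway_ok F c.
Proof.
exists #|X|; apply/existsP.
exists [ffun x => [ffun i : 'I_#|X| => i == enum_rank x]].
apply/existsP.
exists [ffun m : {ffun 'I_#|X| -> bool} =>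
          [ffun y => if [pick i | m i] is Some i then F (enum_val i) y else false]].
apply/forallP => x; apply/forallP => y; rewrite !ffunE.
case: pickP => [i|].
- by rewrite ffunE => /eqP ->; rewrite enum_rankK.
- by move/(_ (enum_rank x)); rewrite ffunE eqxx.
Qed.

Definition Dcc_oneway (X Y : finType) (F : X -> Y -> bool) : nat :=
  ex_minn (oneway_ok_ex F).

(* Main.v *)
Require Import Defs.
From mathcomp Require Import all_boot.
Set Implicit Arguments. Unset Strict Implicit. Unset Printing Implicit Defensive.

Definition mz n (x : bits n) : nat := \max_(i : 'I_n | ~~ x i) i.+1.

Definition uu n (j : nat) : bits n := [ffun i : 'I_n => j <= i].

Lemma mz_le n (x : bits n) : mz x <= n.
Proof. by apply/bigmax_leqP => i _; exact: ltn_ord. Qed.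

Lemma mz_uu n j : j <= n -> mz (uu n j) = j.
Proof.
move=> jn; apply/eqP; rewrite eqn_leq; apply/andP; split.
  by apply/bigmax_leqP => i; rewrite ffunE -ltnNge.
case: j jn => [|j] jn //.
have ij : j < n by [].
by apply: (leq_bigmax_cond (Ordinal ij)); rewrite /= ffunE /= ltnn.
Qed.

Lemma OMB_uu n j : j <= n -> OMB (uu n j) = odd j.
Proof. by move=> jn; rewrite /OMB -/(mz _) mz_uu. Qed.

Lemma mz_and n (x y : bits n) :
  mz [ffun i => x i && y i] = maxn (mz x) (mz y).
Proof.
apply/eqP; rewrite eqn_leq; apply/andP; split.
  apply/bigmax_leqP => i; rewrite ffunE negb_and => /orP[] H.
    by rewrite leq_max (leq_bigmax_cond i H).
  by rewrite leq_max (leq_bigmax_cond i H) orbT.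
rewrite geq_max; apply/andP; split; apply/bigmax_leqP => i H;
  by apply: leq_bigmax_cond; rewrite ffunE negb_and H ?orbT.
Qed.

Lemma uu_and n j1 j2 : [ffun i => uu n j1 i && uu n j2 i] = uu n (maxn j1 j2).
Proof. by apply/ffunP => i; rewrite !ffunE geq_max. Qed.

Lemma naadt_n n (f : bits n -> bool) : naadt_ok f n.
Proof.
apply/existsP; exists [ffun i => [set i]].
apply/forallP => x; apply/forallP => y; apply/implyP => /forallP H.
have -> // : x = y.
apply/ffunP => i; move: (H i); rewrite ffunE /ANDS.
case Hx: (x i); case Hy: (y i) => //.
- move/eqP => E; have : [forall j in [set i], x j].
    by apply/forall_inP => j; rewrite in_set1 => /eqP ->.
  by rewrite E => /forall_inP /(_ i); rewrite in_set1 eqxx Hy => /(_ isT).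
- move/eqP => E; have : [forall j in [set i], y j].
    by apply/forall_inP => j; rewrite in_set1 => /eqP ->.
  by rewrite -E => /forall_inP /(_ i); rewrite in_set1 eqxx Hx => /(_ isT).
Qed.

Lemma ANDS_uu_mono n (S : {set 'I_n}) j1 j2 : j1 <= j2 ->
  ANDS S (uu n j2) -> ANDS S (uu n j1).
Proof.
move=> le /forall_inP H; apply/forall_inP => i iS; move: (H i iS).
by rewrite !ffunE => H2; apply: leq_trans le H2.
Qed.

Lemma naadt_lb n k : naadt_ok (@OMB n) k -> n <= k.
Proof.
case/existsP => S /forallP H.
have Hex : forall j : 'I_n, exists t : 'I_k,
    ANDS (S t) (uu n j) != ANDS (S t) (uu n j.+1).
  move=> j; apply/existsP; rewrite -negb_forall; apply/negP => Hall.
  move: (H (uu n j)) => /forallP /(_ (uu n j.+1)) /implyP /(_ Hall).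
  by rewrite !OMB_uu // ?(ltnW (ltn_ord j)) // oddS; case: (odd j).
pose g j := xchoose (Hex j).
have Hg : forall j, ANDS (S (g j)) (uu n j) && ~~ ANDS (S (g j)) (uu n j.+1).
  move=> j; have := xchooseP (Hex j); rewrite -/(g j).
  case E1: (ANDS _ (uu n j)); case E2: (ANDS _ (uu n j.+1)) => //.
  by move: (ANDS_uu_mono (leqnSn j) E2); rewrite E1.
have ginj : injective g.
  move=> j1 j2 E; case: (ltngtP j1 j2) => [lt|lt|/val_inj //]; exfalso.
  - move: (Hg j1) (Hg j2) => /andP[_ /negP A] /andP[B _].
    by apply: A; rewrite E; exact: ANDS_uu_mono lt B.
  - move: (Hg j1) (Hg j2) => /andP[B _] /andP[_ /negP A].
    by apply: A; rewrite -E; exact: ANDS_uu_mono lt B.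
by have := leq_card _ ginj; rewrite !card_ord.
Qed.

Lemma oneway_factor (X Y T : finType) (F : X -> Y -> bool) (h : X -> T)
  (G : T -> Y -> bool) c :
  (forall x y, F x y = G (h x) y) -> #|T| <= 2 ^ c -> oneway_ok F c.
Proof.
move=> HF Hc.
have Hc' : #|T| <= #|{ffun 'I_c -> bool}| by rewrite card_ffun card_bool card_ord.
pose enc (t : T) : {ffun 'I_c -> bool} := enum_val (widen_ord Hc' (enum_rank t)).
have encI : injective enc.
  move=> t1 t2 /enum_val_inj /(congr1 val) /= /val_inj /enum_rank_inj //.
apply/existsP; exists [ffun x => enc (h x)]; apply/existsP.
exists [ffun m => [ffun y => if [pick t | enc t == m] is Some t then G t y else false]].
apply/forallP => x; apply/forallP => y; rewrite !ffunE HF.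
case: pickP => [t /eqP /encI -> //|].
by move/(_ (h x)); rewrite eqxx.
Qed.

Lemma oneway_ub n : oneway_ok (compAND (@OMB n)) (up_log 2 n.+1).
Proof.
apply: (@oneway_factor _ _ _ _ (fun x => inord (mz x) : 'I_n.+1)
          (fun t y => odd (maxn t (mz y)))); last first.
  by rewrite card_ord; apply: up_logP.
move=> x y; rewrite /compAND /OMB -/(mz _) mz_and inordK // ltnS; exact: mz_le.
Qed.

Lemma oneway_lb n c : oneway_ok (compAND (@OMB n)) c -> n.+1 <= 2 ^ c.
Proof.
case/existsP => a /existsP [b /forallP H].
have HF : forall j1 j2, j1 <= n -> j2 <= n ->
    compAND (@OMB n) (uu n j1) (uu n j2) = odd (maxn j1 j2).
  by move=> j1 j2 h1 h2; rewrite /compAND uu_and OMB_uu // geq_max h1.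
have key : forall j1 j2, j1 < j2 -> j2 <= n -> a (uu n j1) != a (uu n j2).
  move=> j1 j2 lt h2; apply/negP => /eqP E.
  have h1 : j1 <= n by apply: ltnW (leq_trans lt h2).
  have h3 : j2.-1 <= n by apply: leq_trans (leq_pred _) h2.
  move: (H (uu n j1)) (H (uu n j2)) => /forallP /(_ (uu n j2.-1)) /eqP A
     /forallP /(_ (uu n j2.-1)) /eqP B.
  have : odd (maxn j1 j2.-1) = odd (maxn j2 j2.-1) by rewrite -!HF // A B E.
  have -> : maxn j1 j2.-1 = j2.-1 by apply/maxn_idPr; rewrite -ltnS prednK // (leq_ltn_trans _ lt).
  have -> : maxn j2 j2.-1 = j2 by apply/maxn_idPl; apply: leq_pred.
  by clear -lt; case: j2 lt => [//|j2] _ /=; case: (odd j2).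
pose g (j : 'I_n.+1) := a (uu n j).
have ginj : injective g.
  move=> j1 j2 E; case: (ltngtP j1 j2) => [lt|lt|/val_inj //]; exfalso.
  - by move/negP: (key _ _ lt (ltn_ord j2)) ; apply; rewrite /g in E; rewrite E.
  - by move/negP: (key _ _ lt (ltn_ord j1)) ; apply; rewrite /g in E; rewrite E.
by have := leq_card _ ginj; rewrite card_ord card_ffun card_bool card_ord.
Qed.

Theorem theorem4p1 (n : nat) (hn : 0 < n) :
  NAADT (@OMB n) = n /\ Dcc_oneway (compAND (@OMB n)) = up_log 2 n.+1.
Proof.
split.
  rewrite /NAADT; case: ex_minnP => m Pm minm.
  by apply/eqP; rewrite eqn_leq minm ?naadt_n // naadt_lb.
rewrite /Dcc_oneway; case: ex_minnP => m Pm minm.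
apply/eqP; rewrite eqn_leq minm ?oneway_ub //.
by apply: up_log_min => //; apply: oneway_lb.
Qed.
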